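(* Let $S\subset[0,\infty)$ with $0\in S$, and let $\{f_n\colon S\to[0,\infty)\}$ be a sequence of decreasing right-continuous functions converging uniformly on $S$ to a function $f$. If $DP(\overline{f_n})\subset S$ for all $n$, then $f$ is decreasing and right-continuous and $DP(\overline{f})\subset S$.
   Context: For $S\subset[0,\infty)$ with $0\in S$, a function on $S$ is right-continuous if it is right-continuous for the relative topology of $S$. For a right-continuous decreasing $f\colon S\to[0,\infty)$ and $x\in\overline{S}$ (closure in $\mathbb{R}$), set $f(x+):=\sup\{f(y)\mid y\in(x,\infty)\cap S\}$ whenever $(x,\infty)\cap S\neq\emptyset$, and $f(x-):=\inf\{f(y)\mid y\in[0,x)\cap S\}$ if $x\neq0$, $f(0-):=f(0)$. Define $\overline{f}\colon\overline{S}\to[0,\infty)$ by $\overline{f}(x)=f(x)$ if $x\in S$, $\overline{f}(x)=f(x+)$ if $x\in\overline{S}\setminus S$ is a right accumulation point of $S$, and $\overline{f}(x)=f(x-)$ otherwise. With $\overline{f}(x-)$ defined by the same formula applied to $\overline{f}$ on $\overline{S}$, the set of left-jump points is $DP(\overline{f}):=\{x\in\overline{S}\setminus\{0\}\mid\overline{f}(x-)>\overline{f}(x)\}$. *)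

(* Defs.v *)
From HB Require Import structures.
From mathcomp Require Import all_boot all_order all_algebra.
From mathcomp Require Import all_classical all_reals topology normedtype.
Set Implicit Arguments. Unset Strict Implicit. Unset Printing Implicit Defensive.
Import Order.TTheory GRing.Theory Num.Theory numFieldNormedType.Exports.
Local Open Scope classical_set_scope.
Local Open Scope ring_scope.

Section Defs.
Variable R : realType.
Implicit Types (S : set R) (f : R -> R).

Definition nonneg_on S f := forall x, S x -> 0 <= f x.

Definition decreasing_on S f := forall x y, S x -> S y -> x <= y -> f y <= f x.

Definition right_continuous_on S f :=
  forall x, S x -> forall e : R, 0 < e ->
    exists2 d : R, 0 < d & forall y, S y -> x <= y -> y < x + d -> `|f y - f x| < e.

Definition rc_decr S f := [/\ nonneg_on S f, decreasing_on S f & right_continuous_on S f].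

Definition rlim S f x : R := sup [set f y | y in [set y | S y /\ x < y]].

Definition llim S f x : R :=
  if x == 0 then f 0 else inf [set f y | y in [set y | S y /\ 0 <= y /\ y < x]].

Definition right_acc S x := forall d : R, 0 < d -> exists y, S y /\ x < y /\ y < x + d.

Definition fbar S f x : R :=
  if `[< S x >] then f x
  else if `[< right_acc S x >] then rlim S f x
  else llim S f x.

(* DP(\overline{f}) : left-jump points of \overline{f} on \overline{S} *)
Definition DP S f : set R :=
  [set x : R | closure (S : set R) x /\ x != 0 /\ llim (closure S) (fbar S f) x > fbar S f x].

End Defs.

(* Main.v *)
Require Import Defs.
From mathcomp Require Import all_boot all_order all_algebra.
From mathcomp Require Import all_classical all_reals topology normedtype.
From mathcomp Require Import lra.
Import Order.TTheory GRing.Theory Num.Theory numFieldNormedType.Exports.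
Local Open Scope classical_set_scope.
Local Open Scope ring_scope.

Section Helpers.
Variable R : realType.

Lemma sup_close (T : Type) (A : set T) (a b : T -> R) (e M : R) : 0 <= e ->
  (forall t, A t -> `|a t - b t| <= e) ->
  (forall t, A t -> a t <= M /\ b t <= M) ->
  `|sup (a @` A) - sup (b @` A)| <= e.
Proof.
move=> e0 Hab HM.
have [[t0 At0]|nA] := pselect (exists t, A t); last first.
  have E : forall c : T -> R, c @` A = set0.
    by move=> c; apply/seteqP; split => // y [t At _]; exfalso; apply: nA; exists t.
  by rewrite !E sup0 subrr normr0.
have ubA : has_ubound (a @` A) by exists M => _ [t At <-]; case: (HM t At).
have ubB : has_ubound (b @` A) by exists M => _ [t At <-]; case: (HM t At).
rewrite ler_distl; apply/andP; split.
- rewrite lerBlDr; apply: ge_sup; first by exists (b t0), t0.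
  move=> _ [t At <-]; have := Hab t At; rewrite ler_distl => /andP[h1 h2].
  have := ub_le_sup ubA (ex_intro2 _ _ t At erefl); lra.
- apply: ge_sup; first by exists (a t0), t0.
  move=> _ [t At <-]; have := Hab t At; rewrite ler_distl => /andP[h1 h2].
  have := ub_le_sup ubB (ex_intro2 _ _ t At erefl); lra.
Qed.

Lemma inf_close (T : Type) (A : set T) (a b : T -> R) (e m : R) : 0 <= e ->
  (forall t, A t -> `|a t - b t| <= e) ->
  (forall t, A t -> m <= a t /\ m <= b t) ->
  `|inf (a @` A) - inf (b @` A)| <= e.
Proof.
move=> e0 Hab HM.
have [[t0 At0]|nA] := pselect (exists t, A t); last first.
  have E : forall c : T -> R, c @` A = set0.
    by move=> c; apply/seteqP; split => // y [t At _]; exfalso; apply: nA; exists t.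
  by rewrite !E inf0 subrr normr0.
have lbA : has_lbound (a @` A) by exists m => _ [t At <-]; case: (HM t At).
have lbB : has_lbound (b @` A) by exists m => _ [t At <-]; case: (HM t At).
rewrite ler_distl; apply/andP; split.
- apply: lb_le_inf; first by exists (a t0), t0.
  move=> _ [t At <-]; have := Hab t At; rewrite ler_distl => /andP[h1 h2].
  have := ge_inf lbB (ex_intro2 _ _ t At erefl); lra.
- rewrite -lerBlDr; apply: lb_le_inf; first by exists (b t0), t0.
  move=> _ [t At <-]; have := Hab t At; rewrite ler_distl => /andP[h1 h2].
  have := ge_inf lbA (ex_intro2 _ _ t At erefl); lra.
Qed.

Lemma sup_in (E : set R) (m M : R) :
  (forall z, E z -> m <= z <= M) -> m <= 0 <= M -> m <= sup E <= M.
Proof.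
move=> HE h0.
have [[z Ez]|nE] := pselect (exists z, E z); last first.
  have -> : E = set0 by apply/seteqP; split => // y Ey; exfalso; apply: nE; exists y.
  by rewrite sup0.
have ub : has_ubound E by exists M => y /HE /andP[].
apply/andP; split.
- have := ub_le_sup ub Ez; have := HE z Ez; move=> /andP[h1 h2] h3; lra.
- by apply: ge_sup; [exists z | move=> y /HE /andP[]].
Qed.

Lemma inf_in (E : set R) (m M : R) :
  (forall z, E z -> m <= z <= M) -> m <= 0 <= M -> m <= inf E <= M.
Proof.
move=> HE h0.
have [[z Ez]|nE] := pselect (exists z, E z); last first.
  have -> : E = set0 by apply/seteqP; split => // y Ey; exfalso; apply: nE; exists y.
  by rewrite inf0.
have lb : has_lbound E by exists m => y /HE /andP[].
apply/andP; split.
- by apply: lb_le_inf; [exists z | move=> y /HE /andP[]].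
- have := ge_inf lb Ez; have := HE z Ez; move=> /andP[h1 h2] h3; lra.
Qed.

Lemma fbar_in (S : set R) (g : R -> R) y :
  S `<=` [set x | 0 <= x] -> S 0 -> nonneg_on S g -> decreasing_on S g ->
  0 <= fbar S g y <= g 0.
Proof.
move=> Snn S0 gnn gdec.
have gb : forall z, S z -> 0 <= g z <= g 0.
  by move=> z Sz; rewrite gnn //=; apply: gdec => //; apply: Snn.
have g0 : 0 <= g 0 by apply: gnn.
rewrite /fbar; case: ifPn => [/asboolP Sy|_]; first exact: gb.
case: ifPn => _.
  by apply: sup_in; [move=> _ [z [Sz _] <-]; apply: gb|rewrite lexx g0].
rewrite /llim; case: ifPn => _; first by rewrite g0 lexx.
by apply: inf_in; [move=> _ [z [Sz _] <-]; apply: gb|rewrite lexx g0].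
Qed.

Lemma fbar_close (S : set R) (g h : R -> R) e y :
  0 <= e -> S `<=` [set x | 0 <= x] -> S 0 ->
  nonneg_on S g -> decreasing_on S g ->
  nonneg_on S h -> decreasing_on S h ->
  (forall x, S x -> `|g x - h x| <= e) ->
  `|fbar S g y - fbar S h y| <= e.
Proof.
move=> e0 Snn S0 gnn gdec hnn hdec Hgh.
have gb : forall z, S z -> 0 <= g z <= g 0.
  by move=> z Sz; rewrite gnn //=; apply: gdec => //; apply: Snn.
have hb : forall z, S z -> 0 <= h z <= h 0.
  by move=> z Sz; rewrite hnn //=; apply: hdec => //; apply: Snn.
have g0 : 0 <= g 0 by apply: gnn.
have h0 : 0 <= h 0 by apply: hnn.
rewrite /fbar; case: ifPn => [/asboolP Sy|_]; first exact: Hgh.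
case: ifPn => _.
  apply: (@sup_close _ _ _ _ _ (g 0 + h 0)) => // => [t [St _]|t [St _]]; first exact: Hgh.
  by have := gb t St; have := hb t St; move=> /andP[? ?] /andP[? ?]; split; lra.
rewrite /llim; case: ifPn => _; first exact: Hgh.
apply: (@inf_close _ _ _ _ _ 0) => // [t [St _]|t [St _]]; first exact: Hgh.
by have := gb t St; have := hb t St; move=> /andP[? ?] /andP[? ?]; split.
Qed.

Lemma llim_close (S : set R) (g h : R -> R) e x :
  0 <= e -> S `<=` [set x | 0 <= x] -> S 0 ->
  nonneg_on S g -> decreasing_on S g ->
  nonneg_on S h -> decreasing_on S h ->
  (forall x, S x -> `|g x - h x| <= e) ->
  `|llim (closure S) (fbar S g) x - llim (closure S) (fbar S h) x| <= e.
Proof.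
move=> e0 Snn S0 gnn gdec hnn hdec Hgh.
rewrite /llim; case: ifPn => _; first exact: fbar_close.
apply: (@inf_close _ _ _ _ _ 0) => // t _; first exact: fbar_close.
by have /andP[] := fbar_in S g t Snn S0 gnn gdec; have /andP[] := fbar_in S h t Snn S0 hnn hdec.
Qed.

End Helpers.

Theorem lemma2p7 (R : realType) (S : set R) (F : nat -> R -> R) (f : R -> R) :
  S `<=` [set x | 0 <= x] -> S 0 ->
  (forall n, rc_decr S (F n)) ->
  (forall e : R, 0 < e -> exists N : nat, forall n, (N <= n)%N ->
     forall x, S x -> `|F n x - f x| < e) ->
  (forall n, DP S (F n) `<=` S) ->
  rc_decr S f /\ DP S f `<=` S.
Proof.
move=> Snn S0 HF Hu HDP.
have fnn : nonneg_on S f.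
  move=> x Sx; rewrite leNgt; apply/negP => fx0.
  have [N HN] := Hu (- f x) ltac:(lra).
  have := HN N (leqnn N) x Sx; rewrite ltr_distl => /andP[h1 h2].
  have [Fnn _ _] := HF N; have := Fnn x Sx; lra.
have fdec : decreasing_on S f.
  move=> x y Sx Sy xy; rewrite leNgt; apply/negP => fxy.
  have [N HN] := Hu ((f y - f x) / 2) ltac:(lra).
  have := HN N (leqnn N) x Sx; rewrite ltr_distl => /andP[h1 h2].
  have := HN N (leqnn N) y Sy; rewrite ltr_distl => /andP[h3 h4].
  have [_ Fdec _] := HF N; have := Fdec x y Sx Sy xy; lra.
have frc : right_continuous_on S f.
  move=> x Sx e e0.
  have [N HN] := Hu (e / 3) ltac:(lra).
  have [_ _ Frc] := HF N.
  have [d d0 Hd] := Frc x Sx (e / 3) ltac:(lra).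
  exists d => // y Sy xy yd.
  have := Hd y Sy xy yd; rewrite ltr_distl => /andP[h1 h2].
  have := HN N (leqnn N) x Sx; rewrite ltr_distl => /andP[h3 h4].
  have := HN N (leqnn N) y Sy; rewrite ltr_distl => /andP[h5 h6].
  rewrite ltr_distl; apply/andP; split; lra.
split; first by split.
move=> x [clx [x0 Hx]].
set e := (llim (closure S) (fbar S f) x - fbar S f x) / 3.
have e0 : 0 < e by rewrite /e; lra.
have [N HN] := Hu e e0.
have [Fnn Fdec _] := HF N.
have Hc : forall z, S z -> `|F N z - f z| <= e.
  by move=> z Sz; apply/ltW/HN.
have := llim_close _ _ _ _ _ x (ltW e0) Snn S0 Fnn Fdec fnn fdec Hc; rewrite ler_distl => /andP[h1 h2].
have := fbar_close _ _ _ _ _ x (ltW e0) Snn S0 Fnn Fdec fnn fdec Hc; rewrite ler_distl => /andP[h3 h4].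
apply: (HDP N); split => //; split => //.
move: h1 h2 h3 h4; rewrite /e; lra.
Qed.
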